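(* For nonnegative integers $a\le A$, $b\le B$, $r$, $R$, let $E_{a,b,r}^{A,B,R}$ be the number of rank-$R$ matrices of size $A\times B$ over $\mathbb{Z}_D$ extending a (fixed, arbitrary) rank-$r$ matrix of size $a\times b$, and $E^{A,B,R}:=E_{0,0,0}^{A,B,R}$. Then $E^{A,B,R}=\Theta(1)\cdot D^{(A+B)R-R^2}$ and $E_{a,b,r}^{A,B,R}=O(1)\cdot D^{(A+B-b)R-br-R^2+(b-a+r+R)^2/4}$.
   Context: $D$ is an odd prime and $\mathbb{Z}_D$ the field with $D$ elements. An $A\times B$ matrix extends an $a\times b$ matrix $M$ if its upper-left $a\times b$ submatrix equals $M$. The implied constants in $\Theta(1)$, $O(1)$ do not depend on $A,B,R,a,b,r$. *)

(* Defs.v *)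
From mathcomp Require Import all_boot all_order all_algebra.
Set Implicit Arguments. Unset Strict Implicit. Unset Printing Implicit Defensive.
Import GRing.Theory.

(* E_{a,b,r}^{A,B,R} for the fixed matrix M: number of rank-R A x B matrices over
   Z_D (= 'F_D for D prime) extending M. *)
Definition ext_count (D A B a b Rk : nat) (Ha : (a <= A)%N) (Hb : (b <= B)%N)
  (M : 'M['F_D]_(a, b)) : nat :=
  #|[set N : 'M['F_D]_(A, B) | (\rank N == Rk) &&
      [forall i : 'I_a, forall j : 'I_b, N (widen_ord Ha i) (widen_ord Hb j) == M i j]]|.

Definition full_count (D A B Rk : nat) : nat :=
  @ext_count D A B 0 0 Rk (leq0n A) (leq0n B) 0%R.

(* Main.v *)
Require Import Defs.
From mathcomp Require Import all_boot all_order all_algebra.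
Set Implicit Arguments. Unset Strict Implicit. Unset Printing Implicit Defensive.
Import GRing.Theory.

Section Counting.
Variable F : finFieldType.
Local Notation q := #|F|.
Local Open Scope ring_scope.

Lemma card_subspace m n (P : 'M[F]_(m, n)) :
  #|[set v : 'rV[F]_n | (v <= P)%MS]| = (q ^ \rank P)%N.
Proof.
transitivity #|[set u *m row_base P | u in 'rV[F]_(\rank P)]|.
  apply: eq_card => v; rewrite !inE; apply/idP/imsetP => [|[u _ ->]].
    by rewrite -(eq_row_base P) => /submxP [u ->]; exists u.
  by rewrite -(eq_row_base P) submxMl.
rewrite card_imset ?card_mx ?mul1n //.
have [B AB1] := row_freeP (row_base_free P); apply: can_inj (mulmx^~ B) _ => v.
by rewrite -mulmxA AB1 mulmx1.
Qed.

Lemma rank_addrow m n (P : 'M[F]_(m, n)) (v : 'rV[F]_n) :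
  \rank (col_mx P v) = if (v <= P)%MS then \rank P else (\rank P).+1.
Proof.
rewrite -addsmxE; case: ifP => vP.
  by rewrite (addsmx_idPl vP).
apply/eqP; rewrite eqn_leq; apply/andP; split.
  apply: (leq_trans (mxrank_adds_leqif P v)).
  by rewrite -[X in (_ <= X)%N]addn1 leq_add2l rank_leq_row.
rewrite (ltn_leqif (mxrank_leqif_sup _)) ?addsmxSl //.
by rewrite addsmx_sub submx_refl vP.
Qed.

Lemma cardv m n (P : 'M[F]_(m, n)) s :
  #|[set v : 'rV[F]_n | \rank (col_mx P v) == s]| =
  ((if \rank P == s then q ^ s else 0) +
   (if (\rank P).+1 == s then q ^ n - q ^ \rank P else 0))%N.
Proof.
have [/eqP <-|ne1] := boolP (\rank P == s).
  rewrite eqn_leq ltnn /= addn0 -(card_subspace P); apply: eq_card => v.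
  by rewrite !inE rank_addrow; case: ifP => _; rewrite ?eqxx // eqn_leq ltnn.
have [/eqP <-|ne2] := boolP ((\rank P).+1 == s).
  rewrite add0n -(card_subspace P).
  have -> : (q ^ n = #|{: 'rV[F]_n}|)%N by rewrite card_mx mul1n.
  transitivity #|~: [set v : 'rV[F]_n | (v <= P)%MS]|; last by rewrite cardsCs setCK.
  apply: eq_card => v.
  rewrite !inE rank_addrow; case: ifP => _ /=; rewrite ?eqxx //.
  by rewrite eqn_leq ltnn andbF.
transitivity 0%N; last by []. apply/eqP; rewrite cards_eq0; apply/eqP/setP => v.
by rewrite !inE rank_addrow; case: ifP => _; rewrite ?(negPf ne1) ?(negPf ne2).
Qed.


Lemma rank_swap m1 m2 m3 n (A : 'M[F]_(m1, n)) (B : 'M[F]_(m2, n)) (C : 'M[F]_(m3, n)) :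
  \rank (col_mx A (col_mx B C)) = \rank (col_mx (col_mx A C) B).
Proof.
rewrite -!addsmxE -(adds_eqmx (eqmx_refl A) (addsmxE B C)).
rewrite -(adds_eqmx (addsmxE A C) (eqmx_refl B)).
by rewrite -addsmxA (addsmxC C B).
Qed.

Lemma sum_if (T : finType) (P : pred T) (c : nat) :
  (\sum_(i : T) (if P i then c else 0) = c * #|[set i | P i]|)%N.
Proof.
rewrite -big_mkcond (eq_bigl (fun i => i \in [set i | P i])) ?sum_nat_const 1?mulnC //.
by move=> i; rewrite inE.
Qed.

Definition cnt m n (P0 : 'M[F]_(m, n)) p s :=
  #|[set Y : 'M[F]_(p, n) | \rank (col_mx P0 Y) == s]|.

Lemma cnt_rec m n (P0 : 'M[F]_(m, n)) p s :
  cnt P0 p.+1 s = (q ^ s * cnt P0 p s +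
     (if s is s'.+1 then (q ^ n - q ^ s') * cnt P0 p s' else 0))%N.
Proof.
rewrite /cnt -sum1_card (partition_big (@dsubmx F 1 p n) xpredT) //=.
rewrite (eq_bigr (fun Y' => #|[set v : 'rV[F]_n | \rank (col_mx (col_mx P0 Y') v) == s]|)); last first.
  move=> Y' _; rewrite (reindex (col_mx^~ Y')) /=; last first.
    exists usubmx => [v _ | vA]; first by rewrite col_mxKu.
    by case/andP=> _ /eqP <-; rewrite vsubmxK.
  rewrite -sum1_card; apply: eq_bigl => v; rewrite !inE col_mxKd eqxx andbT.
  by congr (_ == _); exact: (rank_swap P0 v Y').
rewrite (eq_bigr _ (fun Y' _ => cardv _ _)) big_split /= sum_if; congr (_ + _)%N.
case: s => [|s'].
  by rewrite big1.
under eq_bigr do rewrite eqSS.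
rewrite (eq_bigr (fun i : 'M[F]_(p, n) => if \rank (col_mx P0 i) == s' then (q ^ n - q ^ s')%N else 0%N)).
  by rewrite sum_if.
by move=> i _; case: eqP => // ->.
Qed.


Lemma rank_col_mx0 m n (P0 : 'M[F]_(m, n)) (Y : 'M[F]_(0, n)) :
  \rank (col_mx P0 Y) = \rank P0.
Proof. by rewrite -addsmxE [Y]flatmx0 addsmx0. Qed.

Lemma cnt0 m n (P0 : 'M[F]_(m, n)) s :
  cnt P0 0 s = (if \rank P0 == s then 1 else 0)%N.
Proof.
rewrite /cnt; case: eqP => H.
  by rewrite -[RHS](card_mx F 0 n); apply: eq_card => Y; rewrite !inE rank_col_mx0 H eqxx.
apply/eqP; rewrite cards_eq0; apply/eqP/setP => Y; rewrite !inE rank_col_mx0.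
by apply/eqP.
Qed.

Lemma cnt_lt m n (P0 : 'M[F]_(m, n)) p s : (s < \rank P0)%N -> cnt P0 p s = 0%N.
Proof.
move=> lt; apply/eqP; rewrite cards_eq0; apply/eqP/setP => Y; rewrite !inE.
apply/negbTE; apply: contraTneq lt => <-; rewrite -leqNgt.
by rewrite -addsmxE mxrankS // addsmxSl.
Qed.

Lemma cnt_gt m n (P0 : 'M[F]_(m, n)) p s : (n < s)%N -> cnt P0 p s = 0%N.
Proof.
move=> lt; apply/eqP; rewrite cards_eq0; apply/eqP/setP => Y; rewrite !inE.
apply/negbTE; apply: contraTneq lt => <-; rewrite -leqNgt.
exact: rank_leq_col.
Qed.

Lemma cnt_gt_row m n (P0 : 'M[F]_(m, n)) p s : (m + p < s)%N -> cnt P0 p s = 0%N.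
Proof.
move=> lt; apply/eqP; rewrite cards_eq0; apply/eqP/setP => Y; rewrite !inE.
apply/negbTE; apply: contraTneq lt => <-; rewrite -leqNgt.
exact: rank_leq_row.
Qed.

Lemma ulsub_usub a p b p' (N : 'M[F]_(a + p, b + p')) :
  ulsubmx N = usubmx (lsubmx N).
Proof. by apply/matrixP => i j; rewrite !mxE. Qed.

Lemma tr_count k n p' (L : 'M[F]_(k, n)) Rk :
  #|[set Rt : 'M[F]_(k, p') | \rank (row_mx L Rt) == Rk]| = cnt L^T p' Rk.
Proof.
rewrite /cnt -(card_imset _ (@trmx_inj _ _ _)); apply: eq_card => Y.
rewrite !inE; apply/imsetP/idP => [[Rt] | H].
  by rewrite inE => H ->; rewrite -mxrank_tr tr_col_mx !trmxK.
exists Y^T; last by rewrite trmxK.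
by rewrite inE -mxrank_tr tr_row_mx trmxK.
Qed.

Lemma ext_sum a p b p' (M : 'M[F]_(a, b)) Rk :
  #|[set N : 'M[F]_(a + p, b + p') | (\rank N == Rk) && (ulsubmx N == M)]| =
  (\sum_(L : 'M[F]_(a + p, b) | usubmx L == M) cnt L^T p' Rk)%N.
Proof.
rewrite -sum1_card (partition_big (@lsubmx F (a + p) b p') (fun L => usubmx L == M)) /=; last first.
  by move=> N; rewrite inE ulsub_usub => /andP [].
apply: eq_bigr => L /eqP HL.
rewrite -tr_count (reindex (row_mx L)) /=; last first.
  exists rsubmx => [Rt _ | N]; first by rewrite row_mxKr.
  by case/andP => _ /eqP <-; rewrite hsubmxK.
rewrite -sum1_card; apply: eq_bigl => Rt; rewrite !inE row_mxKl eqxx andbT.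
by rewrite ulsub_usub row_mxKl HL eqxx andbT.
Qed.

Lemma colmx_inj a p b (M : 'M[F]_(a, b)) : injective (@col_mx F a p b M).
Proof. by move=> Y1 Y2 H; rewrite -(col_mxKd M Y1) H col_mxKd. Qed.

Lemma card_L a p b (M : 'M[F]_(a, b)) s :
  #|[set L : 'M[F]_(a + p, b) | (usubmx L == M) && (\rank L == s)]| = cnt M p s.
Proof.
rewrite /cnt -(card_imset _ (@colmx_inj a p b M)) ; apply: eq_card => L.
rewrite !inE; apply/andP/imsetP => [[/eqP HM Hr] | [Y]].
  exists (dsubmx L); first by rewrite inE -HM vsubmxK.
  by rewrite -HM vsubmxK.
by rewrite inE => H ->; rewrite col_mxKu eqxx.
Qed.

Lemma ext_eq a p b p' (Ha : (a <= a + p)%N) (Hb : (b <= b + p')%N) (M : 'M[F]_(a, b))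
  (N : 'M[F]_(a + p, b + p')) :
  [forall i : 'I_a, forall j : 'I_b, N (widen_ord Ha i) (widen_ord Hb j) == M i j] =
  (ulsubmx N == M).
Proof.
apply/forallP/eqP => [H | <- i].
  apply/matrixP => i j; rewrite !mxE; have /eqP <- := forallP (H i) j.
  by congr (N _ _); apply: val_inj.
apply/forallP => j; rewrite !mxE; apply/eqP.
by congr (N _ _); apply: val_inj.
Qed.

Lemma sum_by_rank k b (P : pred 'M[F]_(k, b)) (f : 'M[F]_(k, b) -> nat) :
  (\sum_(L | P L) f L = \sum_(s < b.+1) \sum_(L | P L && (\rank L == s)) f L)%N.
Proof.
rewrite (partition_big (fun L : 'M[F]_(k, b) => (inord (\rank L) : 'I_b.+1)) xpredT) //=.
apply: eq_bigr => s _; apply: eq_bigl => L; congr (_ && _).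
have hL : (\rank L < b.+1)%N by rewrite ltnS rank_leq_col.
apply/eqP/eqP => [<- | H]; first by rewrite inordK.
by apply: val_inj; rewrite /= inordK.
Qed.

End Counting.

From Stdlib Require Import Reals Lra Lia ZArith.
From HB Require Import structures.
Local Open Scope R_scope.
Lemma RplusA : associative Rplus. Proof. by move=> x y z; rewrite Rplus_assoc. Qed.
HB.instance Definition _ := Monoid.isComLaw.Build R 0 Rplus RplusA Rplus_comm Rplus_0_l.

From Stdlib Require Import Reals Lra Lia.
Local Open Scope R_scope.

Lemma INR_addn (a b : nat) : INR (a + b)%nat = INR a + INR b.
Proof. by rewrite -plusE plus_INR. Qed.
Lemma INR_muln (a b : nat) : INR (a * b)%nat = INR a * INR b.
Proof. by rewrite -multE mult_INR. Qed.
Lemma INR_expn (a b : nat) : INR (expn a b) = INR a ^ b.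
Proof. elim: b => [|b IH]; first by rewrite expn0. by rewrite expnS INR_muln IH /=; ring. Qed.
Lemma INR_subn (a b : nat) : (b <= a)%nat -> INR (a - b)%nat = INR a - INR b.
Proof. move/leP=> h; by rewrite -minusE minus_INR. Qed.

Lemma powD x a b : x ^ (addn a b) = x ^ a * x ^ b.
Proof. by rewrite -plusE pow_add. Qed.

Section Real.
Variable Q : R.
Hypothesis HQ : 3 <= Q.

Fixpoint Pi (m k : nat) : R :=
  match k with O => 1 | S k => Pi m k * (Q ^ m - Q ^ k) end.

Lemma Q1 : 1 <= Q. Proof. lra. Qed.
Lemma Qpow_ge1 k : 1 <= Q ^ k.
Proof. by rewrite -(pow1 k); apply: pow_incr; lra. Qed.
Lemma Qpow_le a b : (a <= b)%coq_nat -> Q ^ a <= Q ^ b.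
Proof. by move=> h; apply: Rle_pow => //; lra. Qed.

Lemma Pi_S m k : Pi (S m) (S k) = (Q ^ (S m) - 1) * Q ^ k * Pi m k.
Proof.
elim: k => [|k IH] /=; first by ring.
rewrite /= in IH; rewrite IH /=; ring.
Qed.

Lemma Pi_zero m k : (m < k)%coq_nat -> Pi m k = 0.
Proof.
elim: k => [|k IH] h; first lia.
rewrite /=; have [->|ne] := Nat.eq_dec m k; first ring.
rewrite IH; [ring|lia].
Qed.

Lemma Pi_up m k : (k <= m)%coq_nat -> 0 <= Pi m k <= Q ^ (m * k).
Proof.
elim: k => [|k IH] h /=; first by rewrite muln0 /=; lra.
have [h1 h2] := IH ltac:(lia).
have hkm : Q ^ k <= Q ^ m by apply: Qpow_le; lia.
have -> : (m * S k)%nat = (m * k + m)%coq_nat by rewrite -multE; lia.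
rewrite pow_add; have := Qpow_ge1 k; have := Qpow_ge1 m; split; nra.
Qed.

Lemma Pi_up0 m k : 0 <= Pi m k <= Q ^ (m * k).
Proof.
case: (Nat.le_gt_cases k m) => h; first exact: Pi_up.
rewrite Pi_zero //; split; first lra.
apply: pow_le; lra.
Qed.

Lemma Pi_low_aux m k : (k <= m)%coq_nat ->
  Q ^ (m * k) * ((Q - 1) * Q ^ m - Q ^ k + 1) <= Pi m k * ((Q - 1) * Q ^ m).
Proof.
elim: k => [|k IH] h /=; first by rewrite muln0 /=; lra.
have IH' := IH ltac:(lia).
have hkm : Q ^ k <= Q ^ m by apply: Qpow_le; lia.
have -> : (m * S k)%nat = (m * k + m)%coq_nat by rewrite -multE; lia.
rewrite pow_add.
have := Qpow_ge1 k; have := Qpow_ge1 m; have := Qpow_ge1 (m * k).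
move=> a1 a2 a3.
have hp : 0 <= Q ^ m - Q ^ k by lra.
have := Rmult_le_compat_r _ _ _ hp IH'.
move=> H.
set Y := Q ^ k in a1 a2 a3 H hkm hp *; set M := Q ^ m in a1 a2 a3 H hkm hp *.
set Z := Q ^ (m * k) in a1 a2 a3 H hkm hp *.
have E : Z * M * ((Q - 1) * M - Q * Y + 1) <=
   Z * ((Q - 1) * M - Y + 1) * (M - Y).
  have : 0 <= Z * (Y * Y - Y) by apply: Rmult_le_pos; nra.
  have -> : Z * ((Q - 1) * M - Y + 1) * (M - Y) = Z * M * ((Q - 1) * M - Q * Y + 1) + Z * (Y * Y - Y) by ring.
  lra.
move: H E; rewrite /= -/Y -/M -/Z => H E.
have -> : Pi m k * (M - Y) * ((Q - 1) * M) = Pi m k * ((Q - 1) * M) * (M - Y) by ring.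
lra.
Qed.

Lemma Pi_low m k : (k <= m)%coq_nat -> Q ^ (m * k) / 2 <= Pi m k.
Proof.
move=> h; have H := Pi_low_aux h.
have hkm : Q ^ k <= Q ^ m by apply: Qpow_le; lia.
have a1 := Qpow_ge1 m; have a2 := Qpow_ge1 (m * k).
have [p0 _] := Pi_up h.
set M := Q ^ m in H hkm a1; set Z := Q ^ (m * k) in H a2 *.
have H2 : Z * ((Q - 1) * M / 2) <= Pi m k * ((Q - 1) * M).
  apply: Rle_trans H; apply: Rmult_le_compat_l; nra.
have pos : 0 < (Q - 1) * M by nra.
apply: (Rmult_le_reg_r ((Q - 1) * M)) => //.
lra.
Qed.

End Real.

Section Closed.
Variable F : finFieldType.
Let Q := INR #|F|.
Hypothesis HQ : 3 <= Q.

Lemma cnt_closed m n (P0 : 'M[F]_(m, n)) p k :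
  INR (cnt P0 p (addn (\rank P0) k)) * Pi Q k k =
  Q ^ (muln p (\rank P0)) * Pi Q p k * Pi Q (subn n (\rank P0)) k.
Proof.
have r0n : (\rank P0 <= n)%nat := rank_leq_col P0.
elim: p k => [|p IH] k.
  rewrite cnt0 mul0n; case: k => [|k].
    by rewrite addn0 eqxx /=; ring.
  have -> : (\rank P0 == \rank P0 + k.+1)%nat = false.
    by apply/negbTE; rewrite -{1}[\rank P0]addn0 eqn_add2l.
  rewrite (@Pi_zero Q 0 k.+1) /=; [ring | lia].
case: k => [|k]; [rewrite addn0 cnt_rec | rewrite addnS cnt_rec].
  have M0 : (match \rank P0 with 0 => 0 | s'.+1 =>
     (expn #|F| n - expn #|F| s') * cnt P0 p s' end)%nat = 0%nat.
    by case: (\rank P0) (@cnt_lt F m n P0 p) => // r' H; rewrite H ?muln0.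
  rewrite M0 addn0 INR_muln INR_expn.
  have IH0 := IH 0%nat; rewrite addn0 /= !Rmult_1_r in IH0.
  rewrite /= !Rmult_1_r IH0 mulSn pow_add -/Q; ring.
rewrite INR_addn INR_muln INR_expn.
have key : INR ((expn #|F| n - expn #|F| (\rank P0 + k)) * cnt P0 p (\rank P0 + k))%nat
   = (Q ^ n - Q ^ (addn (\rank P0) k)) * INR (cnt P0 p (addn (\rank P0) k)).
  case: (leqP (\rank P0 + k) n) => h.
    rewrite INR_muln INR_subn ?INR_expn //.
    apply: leq_pexp2l => //; by apply/card_gt0P; exists (@GRing.zero F).
  by rewrite (cnt_gt _ _ h) muln0 /=; ring.
rewrite key.
have IH1 := IH k.+1; rewrite addnS in IH1.
have IH2 := IH k.
set Xa := INR (cnt P0 p (addn (\rank P0) k).+1) in IH1 *.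
set Xb := INR (cnt P0 p (addn (\rank P0) k)) in IH2 *.
have n' : n = (\rank P0 + (n - \rank P0))%nat by rewrite subnKC.
have PS := Pi_S Q k k.
transitivity (Q ^ (addn (\rank P0) k).+1 * (Xa * Pi Q k.+1 k.+1) +
  (Q ^ n - Q ^ (addn (\rank P0) k)) * ((Q ^ k.+1 - 1) * Q ^ k) * (Xb * Pi Q k k)).
  rewrite Rmult_plus_distr_r; congr (_ + _); [rewrite -/Q; ring | rewrite PS -/Q; ring].
rewrite IH1 IH2 Pi_S /=.
have Qn : Q ^ n = Q ^ \rank P0 * Q ^ (subn n (\rank P0)) by rewrite -powD subnKC.
rewrite Qn mulSn !powD.
move: (Q ^ (subn n _)) (Q ^ \rank P0) (Q ^ k) (Q ^ p) (Q ^ muln p _) (Pi Q p k) (Pi Q _ k) => a b c d e f g.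
ring.
Qed.


Lemma Qpos : 0 < Q. Proof. lra. Qed.

Lemma cnt_upper m n (P0 : 'M[F]_(m, n)) p k :
  INR (cnt P0 p (addn (\rank P0) k)) * Q ^ (muln k k) <=
  2 * Q ^ (muln p (\rank P0)) * Q ^ (muln p k) * Q ^ (muln (subn n (\rank P0)) k).
Proof.
have E := cnt_closed P0 p k.
have [a1 a2] := Pi_up0 HQ p k.
have [b1 b2] := Pi_up0 HQ (subn n (\rank P0)) k.
have c1 := Pi_low HQ (le_n k).
have X0 := pos_INR (cnt P0 p (addn (\rank P0) k)).
have e0 : 0 <= Q ^ (muln p (\rank P0)) by apply: pow_le; lra.
have e1 : 0 < Q ^ (muln k k) by apply: pow_lt; lra.
move: E a1 a2 b1 b2 c1 X0 e0 e1.
move: (INR (cnt P0 p (addn (\rank P0) k))) => X.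
move: (Pi Q p k) => U; move: (Pi Q (subn n (\rank P0)) k) => V; move: (Pi Q k k) => W.
move: (Q ^ muln k k) => K; move: (Q ^ muln p (\rank P0)) => A0.
move: (Q ^ muln p k) => B0; move: (Q ^ muln (subn n (\rank P0)) k) => C0.
move=> E a1 a2 b1 b2 c1 X0 e0 e1.
have h1 : X * K <= 2 * (X * W) by nra.
rewrite E in h1.
have h2 : A0 * U * V <= A0 * B0 * C0.
  apply: Rmult_le_compat; [exact: Rmult_le_pos | exact b1 | exact: Rmult_le_compat_l | exact b2].
nra.
Qed.

Lemma cnt_lower n (P0 : 'M[F]_(0, n)) p k : (k <= p)%coq_nat -> (k <= n)%coq_nat ->
  Q ^ (muln p k) * Q ^ (muln n k) / 4 <= INR (cnt P0 p k) * Q ^ (muln k k).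
Proof.
move=> hp hn.
have r0 : \rank P0 = 0%nat by rewrite [P0]flatmx0 mxrank0.
have E := cnt_closed P0 p k; rewrite r0 add0n muln0 subn0 /= Rmult_1_l in E.
have [a1 a2] := Pi_up0 HQ k k.
have c1 := Pi_low HQ hp.
have c2 := Pi_low HQ hn.
have X0 := pos_INR (cnt P0 p k).
have z1 := pow_le Q (muln p k) ltac:(lra).
have z2 := pow_le Q (muln n k) ltac:(lra).
move: E a1 a2 c1 c2 X0 z1 z2.
move: (INR (cnt P0 p k)) => X.
move: (Pi Q p k) => U; move: (Pi Q n k) => V; move: (Pi Q k k) => W.
move: (Q ^ muln k k) => K; move: (Q ^ muln p k) => B0; move: (Q ^ muln n k) => C0.
move=> E a1 a2 c1 c2 X0 z1 z2.
have h1 : X * W <= X * K by nra.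
have h2 : B0 / 2 * (C0 / 2) <= U * V.
  apply: Rmult_le_compat; lra.
nra.
Qed.

End Closed.

Lemma INR_dist (s m : nat) : INR (addn (subn s m) (subn m s)) = Rabs (INR s - INR m).
Proof.
case: (leqP s m) => h.
  have -> : subn s m = 0%nat by apply/eqP; rewrite subn_eq0.
  rewrite add0n INR_subn //.
  have h'' : (s <= m)%coq_nat by apply/leP.
  have h' := le_INR _ _ h''; clear h h''.
  rewrite Rabs_left1; [ring | lra].
have -> : subn m s = 0%nat by apply/eqP; rewrite subn_eq0 ltnW.
rewrite addn0 INR_subn; last exact: ltnW.
have h'' : (m <= s)%coq_nat by apply/leP; rewrite ltnW.
have h' := le_INR _ _ h''; clear h h''.
rewrite Rabs_right; [ring | lra].
Qed.

Lemma near_nat (c : R) : exists m : nat, forall s : nat,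
  INR (addn (subn s m) (subn m s)) - 1/2 <= Rabs (INR s - c).
Proof.
have [h1 h2] := archimed (c - 1/2).
set z := up (c - 1/2) in h1 h2.
exists (Z.to_nat z) => s.
rewrite INR_dist.
have E : INR (Z.to_nat z) = IZR (Z.max 0 z) by rewrite INR_IZR_INZ ZifyInst.of_nat_to_nat_eq.
rewrite E.
have hs := pos_INR s.
case: (Z.le_gt_cases 0 z) => hz.
  rewrite Z.max_r //.
  have t := Rabs_triang (INR s - c) (c - IZR z).
  have -> : INR s - IZR z = (INR s - c) + (c - IZR z) by ring.
  have : Rabs (c - IZR z) <= 1/2 by apply: Rabs_le; lra.
  lra.
rewrite Z.max_l; last lia.
have : IZR z <= -1 by apply: IZR_le; lia.
move=> hz'.
rewrite Rminus_0_r Rabs_right ?Rabs_right; lra.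
Qed.

Lemma geo (x : R) (m N : nat) : 0 <= x < 1 ->
  \big[Rplus/0]_(s < N) x ^ (addn (subn s m) (subn m s)) <=
  x ^ (subn m N) * x / (1 - x) + (1 - x ^ (subn N m)) / (1 - x).
Proof.
move=> [x0 x1].
have nz : 1 - x <> 0 by lra.
elim: N => [|N IH].
  rewrite big_ord0 subn0 sub0n /=.
  have := pow_le x m x0.
  move=> h; have : 0 <= x ^ m * x / (1 - x).
    apply: Rmult_le_pos; [nra | apply: Rlt_le; apply: Rinv_0_lt_compat; lra].
  lra.
rewrite big_ord_recr /=.
case: (ltnP N m) => h.
  have e1 : subn N m = 0%nat by apply/eqP; rewrite subn_eq0 ltnW.
  have e2 : subn N.+1 m = 0%nat by apply/eqP; rewrite subn_eq0.
  have e3 : subn m N = (subn m N.+1).+1 by rewrite subnSK.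
  rewrite e1 e2 add0n e3 in IH *.
  set e := subn m N.+1 in IH *. clear h.
  apply: Rle_trans (Rplus_le_compat_r _ _ _ IH) _.
  right; rewrite /=; field; lra.
have e1 : subn m N = 0%nat by apply/eqP; rewrite subn_eq0.
have e2 : subn m N.+1 = 0%nat by apply/eqP; rewrite subn_eq0 (leq_trans h).
have e3 : subn N.+1 m = (subn N m).+1 by rewrite subSn.
rewrite e1 e2 e3 addn0 in IH *. clear h.
apply: Rle_trans (Rplus_le_compat_r _ _ _ IH) _.
right; rewrite /=; field; lra.
Qed.

Lemma geo2 (x : R) (m N : nat) : 0 <= x <= 1/3 ->
  \big[Rplus/0]_(s < N) x ^ (addn (subn s m) (subn m s)) <= 2.
Proof.
move=> [x0 x1].
have hx : 0 <= x < 1 by lra.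
have G := @geo x m N hx.
apply: Rle_trans G _.
have a1 := pow_le x (subn m N) x0.
have a2 := pow_le x (subn N m) x0.
have b1 : x ^ (subn m N) <= 1 by rewrite -(pow1 (subn m N)); apply: pow_incr; lra.
have b2 : x ^ (subn N m) <= 1 by rewrite -(pow1 (subn N m)); apply: pow_incr; lra.
have h : 0 < 1 - x by lra.
apply: (Rmult_le_reg_r (1 - x)) => //.
have -> : (x ^ subn m N * x / (1 - x) + (1 - x ^ subn N m) / (1 - x)) * (1 - x) =
   x ^ subn m N * x + (1 - x ^ subn N m) by field; lra.
nra.
Qed.

Lemma gauss (Q : R) (HQ : 3 <= Q) (c : R) (N : nat) :
  \big[Rplus/0]_(s < N) Rpower Q (- (INR s - c) ^ 2) <= 2 * Q.
Proof.
have [m Hm] := near_nat c.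
have Q0 : 0 < Q by lra.
have step : forall s : nat,
    Rpower Q (- (INR s - c) ^ 2) <= Q * (/ Q) ^ (addn (subn s m) (subn m s)).
  move=> s; rewrite pow_inv -(@Rpower_pow _ Q Q0) -[X in Rle _ (Rmult X _)](Rpower_1 Q) // -Rpower_Ropp -Rpower_plus.
  apply: Rle_Rpower; first lra.
  have := Hm s; have := Rabs_pos (INR s - c); rewrite -(pow2_abs (INR s - c)).
  move: (Rabs (INR s - c)) => u; move: (INR _) => d; nra.
have H : \big[Rplus/0]_(s < N) Rpower Q (- (INR s - c) ^ 2) <=
   Q * \big[Rplus/0]_(s < N) (/ Q) ^ (addn (subn s m) (subn m s)).
  apply: (@big_ind2 _ _ (fun a b => a <= Q * b)).
  - lra.
  - by move=> a1 b1 a2 b2 h1 h2; lra.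
  - by move=> i _; apply: step.
apply: Rle_trans H _.
have x0 : 0 <= / Q <= 1/3.
  split; first by apply: Rlt_le; apply: Rinv_0_lt_compat.
  apply: Rle_trans (Rinv_le_contravar 3 Q ltac:(lra) HQ) _; lra.
have := geo2 m N x0.
move: (\big[Rplus/0]_(s < N) _) => S h; nra.
Qed.

Lemma bound_form (Q : R) (HQ : 0 < Q) (X : R) (a1 a2 a3 k : nat) :
  X * Q ^ k <= 2 * Q ^ a1 * Q ^ a2 * Q ^ a3 ->
  X <= 2 * Rpower Q (INR a1 + INR a2 + INR a3 - INR k).
Proof.
rewrite /Rminus !Rpower_plus Rpower_Ropp !Rpower_pow // => h.
have hk : 0 < Q ^ k by apply: pow_lt.
apply: (Rmult_le_reg_r (Q ^ k)) => //.
have -> : 2 * (Q ^ a1 * Q ^ a2 * Q ^ a3 * / Q ^ k) * Q ^ k = 2 * Q ^ a1 * Q ^ a2 * Q ^ a3.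
  by field; lra.
exact: h.
Qed.

Lemma part2_term (Q : R) (HQ : 3 <= Q) (a p b p' r Rk s k1 k2 : nat) (X U : R) :
  s = addn r k1 -> Rk = addn s k2 -> (r <= b)%coq_nat -> (s <= addn a p)%coq_nat ->
  0 <= X ->
  X * Q ^ (muln k1 k1) <= 2 * Q ^ (muln p r) * Q ^ (muln p k1) * Q ^ (muln (subn b r) k1) ->
  0 <= U ->
  U * Q ^ (muln k2 k2) <= 2 * Q ^ (muln p' s) * Q ^ (muln p' k2) * Q ^ (muln (subn (addn a p) s) k2) ->
  X * U <= 4 * Rpower Q ((INR a + INR p + INR p') * INR Rk - INR b * INR r - INR Rk ^ 2
                  + (INR b - INR a + INR r + INR Rk) ^ 2 / 4)
             * Rpower Q (- (INR s - (INR b - INR a + INR r + INR Rk) / 2) ^ 2).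
Proof.
move=> es eR hrb hsap X0 hX U0 hU.
have Q0 : 0 < Q by lra.
have {}hX := bound_form Q0 hX.
have {}hU := bound_form Q0 hU.
apply: Rle_trans (Rmult_le_compat _ _ _ _ X0 U0 hX hU) _.
rewrite (Rmult_assoc 4) -Rpower_plus.
have -> : 2 * Rpower Q (INR (muln p r) + INR (muln p k1) + INR (muln (subn b r) k1) - INR (muln k1 k1)) *
  (2 * Rpower Q (INR (muln p' s) + INR (muln p' k2) + INR (muln (subn (addn a p) s) k2) - INR (muln k2 k2)))
  = 4 * Rpower Q ((INR (muln p r) + INR (muln p k1) + INR (muln (subn b r) k1) - INR (muln k1 k1)) +
     (INR (muln p' s) + INR (muln p' k2) + INR (muln (subn (addn a p) s) k2) - INR (muln k2 k2))).
  by rewrite Rpower_plus; ring.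
right; congr (_ * Rpower Q _).
have hrb' : leq r b by apply/leP.
have hsap' : leq s (addn a p) by apply/leP.
rewrite !INR_muln (INR_subn hrb') (INR_subn hsap') !INR_addn.
clear hrb' hsap'.
subst Rk s; rewrite !INR_addn.
field.
Qed.

Lemma full_cnt D A B Rk (P0 : 'M['F_D]_(0, B)) : full_count D A B Rk = cnt P0 A Rk.
Proof.
rewrite /full_count /ext_count /cnt; apply: eq_card => N; rewrite !inE.
rewrite -addsmxE [P0]flatmx0 adds0mx.
apply/idP/idP => [/andP [] // | H]; apply/andP; split => //.
by apply/forallP => -[].
Qed.

Lemma INR_sum_le (I : finType) (P : pred I) (f : I -> nat) (U : R) :
  (forall i, P i -> INR (f i) <= U) ->
  INR (\sum_(i | P i) f i)%nat <= INR #|[set i | P i]| * U.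
Proof.
move=> H.
have H1 : INR (\sum_(i | P i) f i)%nat <= \big[Rplus/0]_(i | P i) U.
  apply: (@big_ind2 _ _ (fun n x => INR n <= x)) => //.
  - by rewrite /=; lra.
  - by move=> x1 x2 y1 y2 h1 h2; rewrite INR_addn; lra.
have H2 : \big[Rplus/0]_(i | P i) U = INR (\sum_(i | P i) 1)%nat * U.
  apply: (@big_ind2 _ _ (fun x n => x = INR n * U)).
  - by rewrite /=; ring.
  - by move=> x1 x2 y1 y2 -> ->; rewrite INR_addn; ring.
  - by move=> i _; rewrite /=; ring.
by rewrite H2 sum1dep_card in H1.
Qed.



Lemma fin1 (X K a b : R) : 0 < K -> 0 <= a -> 0 <= b ->
  a * b / 4 <= X * K -> X * K <= 2 * 1 * a * b ->
  1/4 * (a * b * / K) <= X /\ X <= 2 * (a * b * / K).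
Proof.
move=> K0 a0 b0 h1 h2; split.
  apply: (Rmult_le_reg_r K) => //.
  have -> : 1 / 4 * (a * b * / K) * K = a * b / 4 by field; lra.
  lra.
apply: (Rmult_le_reg_r K) => //.
have -> : 2 * (a * b * / K) * K = 2 * 1 * a * b by field; lra.
lra.
Qed.

Lemma div_bound (X K A B C : R) : 0 < K -> X * K <= 2 * A * B * C -> X <= 2 * A * B * C / K.
Proof.
move=> K0 h; apply: (Rmult_le_reg_r K) => //.
have -> : 2 * A * B * C / K * K = 2 * A * B * C by field; lra.
exact: h.
Qed.

Lemma Rp_pos (Q y : R) : 0 < Rpower Q y.
Proof. exact: exp_pos. Qed.

Lemma zero_le_term (Q c d : R) : 0 <= 4 * Rpower Q c * Rpower Q d.
Proof. have := Rp_pos Q c; have := Rp_pos Q d; nra. Qed.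

Theorem lemma5 (D : nat) (HD : prime D) (Hodd : odd D) :
  (exists c1 c2 : R, 0 < c1 /\ 0 < c2 /\
     forall A B Rk : nat, (Rk <= minn A B)%nat ->
       c1 * Rpower (INR D) ((INR A + INR B) * INR Rk - INR Rk ^ 2)
         <= INR (full_count D A B Rk)
       /\ INR (full_count D A B Rk)
         <= c2 * Rpower (INR D) ((INR A + INR B) * INR Rk - INR Rk ^ 2))
  /\
  (exists C : R, 0 < C /\
     forall (A B a b r Rk : nat) (Ha : (a <= A)%nat) (Hb : (b <= B)%nat)
            (M : 'M['F_D]_(a, b)),
       \rank M = r ->
       INR (ext_count Rk Ha Hb M)
         <= C * Rpower (INR D)
                 (INR (A + B - b) * INR Rk - INR b * INR r - INR Rk ^ 2
                  + (INR b - INR a + INR r + INR Rk) ^ 2 / 4)).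
Proof.
have D3 : (2 < D)%nat.
  have := prime_gt1 HD; rewrite leq_eqVlt => /orP [/eqP E|//].
  by rewrite -E in Hodd.
have cardF : #|'F_D| = D := card_Fp HD.
have HQ : 3 <= INR #|'F_D|.
  rewrite cardF; have h : (3 <= D)%coq_nat by apply/leP.
  have := le_INR _ _ h; rewrite /=; clear; lra.
have QD : INR D = INR #|'F_D| by rewrite cardF.
rewrite QD; clear QD.
move: HQ; set Q := INR #|'F_D| => HQ.
clear Hodd D3.
split.
  exists (1/4), 2; split; first lra; split; first lra.
  move=> A B Rk Hk.
  have [hA hB] : (Rk <= A)%coq_nat /\ (Rk <= B)%coq_nat.
    by rewrite leq_min in Hk; case/andP: Hk => h1 h2; split; apply/leP.
  clear Hk.
  have [P0 _] : exists P0 : 'M['F_D]_(0, B), True by exists (@GRing.zero _).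
  have r0 : \rank P0 = 0%nat by rewrite [P0]flatmx0 mxrank0.
  rewrite (full_cnt _ _ P0).
  have U := cnt_upper HQ P0 A Rk.
  rewrite r0 add0n muln0 subn0 /= in U.
  have L := cnt_lower HQ P0 hA hB.
  have RP : Rpower Q ((INR A + INR B) * INR Rk - INR Rk ^ 2) =
      Q ^ (muln A Rk) * Q ^ (muln B Rk) * / Q ^ (muln Rk Rk).
    have -> : (INR A + INR B) * INR Rk - INR Rk ^ 2 =
        INR (muln A Rk) + INR (muln B Rk) + - INR (muln Rk Rk) by rewrite !INR_muln; ring.
    by rewrite !Rpower_plus Rpower_Ropp !Rpower_pow //; lra.
  rewrite RP.
  apply: fin1 => //.
  - by apply: pow_lt; lra.
  - by apply: pow_le; lra.
  - by apply: pow_le; lra.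
exists (4 * (2 * Q)); split; first lra.
move=> A B a b r Rk Ha Hb M HrM.
move: (A - a)%nat (subnKC Ha) => p eA; subst A.
move: (B - b)%nat (subnKC Hb) => p' eB; subst B.
have E1 : ext_count Rk Ha Hb M =
    #|[set N : 'M['F_D]_(a + p, b + p') | (\rank N == Rk) && (ulsubmx N == M)]|.
  by rewrite /ext_count; apply: eq_card => N; rewrite !inE ext_eq.
rewrite E1 ext_sum (sum_by_rank (fun L => usubmx L == M)).
rewrite (big_morph INR INR_addn (erefl (INR 0))).
have -> : INR (a + p + (b + p') - b) = INR a + INR p + INR p'.
  have -> : (a + p + (b + p') - b = a + p + p')%nat.
    by rewrite -!plusE -!minusE; lia.
  by rewrite !INR_addn.
set T := (INR a + INR p + INR p') * INR Rk - INR b * INR r - INR Rk ^ 2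
          + (INR b - INR a + INR r + INR Rk) ^ 2 / 4.
set c := (INR b - INR a + INR r + INR Rk) / 2.
have step : forall s : nat,
   INR (\sum_(L : 'M['F_D]_(a + p, b) | (usubmx L == M) && (\rank L == s)) cnt L^T p' Rk)%nat <=
   4 * Rpower Q T * Rpower Q (- (INR s - c) ^ 2).
  move=> s.
  pose V := if (s <= Rk)%nat then
     2 * Q ^ (muln p' s) * Q ^ (muln p' (subn Rk s)) * Q ^ (muln (subn (addn a p) s) (subn Rk s))
       / Q ^ (muln (subn Rk s) (subn Rk s)) else 0.
  apply: Rle_trans (@INR_sum_le _ (fun L : 'M['F_D]_(a + p, b) => (usubmx L == M) && (\rank L == s)) (fun L => cnt L^T p' Rk) V _) _.
    move=> L /andP [_ /eqP rL]; rewrite /V; case: ifP => hs.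
      have U := cnt_upper HQ L^T p' (subn Rk s).
      rewrite mxrank_tr rL subnKC // in U.
      apply: div_bound => //; apply: pow_lt; lra.
    rewrite cnt_lt; first by rewrite /=; lra.
    by rewrite mxrank_tr rL ltnNge hs.
  rewrite card_L.
  case: (ltnP s r) => hsr.
    rewrite cnt_lt ?HrM //= Rmult_0_l; exact: zero_le_term.
  case: (ltnP (addn a p) s) => hsap.
    rewrite cnt_gt_row //= Rmult_0_l; exact: zero_le_term.
  rewrite /V; case: ifP => hsR; last first.
    rewrite Rmult_0_r; exact: zero_le_term.
  have hX := cnt_upper HQ M p (subn s r).
  rewrite HrM subnKC // in hX.
  have hrb : (r <= b)%coq_nat by apply/leP; rewrite -HrM rank_leq_col.
  have hsap' : (s <= addn a p)%coq_nat by apply/leP.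
  apply: (part2_term HQ (k1 := subn s r) (k2 := subn Rk s)).
  - by rewrite subnKC.
  - by rewrite subnKC.
  - exact: hrb.
  - exact: hsap'.
  - exact: pos_INR.
  - exact: hX.
  - have := pow_lt Q (muln (subn Rk s) (subn Rk s)) ltac:(lra).
    have := pow_le Q (muln p' s) ltac:(lra).
    have := pow_le Q (muln p' (subn Rk s)) ltac:(lra).
    have := pow_le Q (muln (subn (addn a p) s) (subn Rk s)) ltac:(lra).
    move: (Q ^ _) (Q ^ _) (Q ^ _) (Q ^ _) => x1 x2 x3 x4 h1 h2 h3 h4.
    apply: Rmult_le_pos; last by apply: Rlt_le; apply: Rinv_0_lt_compat.
    by apply: Rmult_le_pos; [apply: Rmult_le_pos; [apply: Rmult_le_pos; lra | ] |].
  - right; field; apply: Rgt_not_eq; apply: pow_lt; lra.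
apply: Rle_trans (_ : _ <= 4 * Rpower Q T * \big[Rplus/0]_(s < b.+1) Rpower Q (- (INR s - c) ^ 2)) _.
  apply: (@big_ind2 _ _ (fun x y => x <= 4 * Rpower Q T * y)).
  - by rewrite Rmult_0_r /=; apply: Rle_refl.
  - by move=> x1 y1 x2 y2 h1 h2; rewrite Rmult_plus_distr_l; lra.
  - by move=> i _; apply: step.
have G := gauss HQ c b.+1.
have := Rp_pos Q T.
move: (\big[Rplus/0]_(s < b.+1) _) (Rpower Q T) G => S t G t0.
nra.
Qed.
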